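(* Let $k, r \geq 1$ be integers and let $G$ be a bipartite graph with bipartition classes $X = \{x_1,\ldots,x_a\}$ and $Y=\{y_1,\ldots,y_b\}$ (with these fixed orderings) and minimum degree at least $2^9 \cdot r \cdot k$. Then there are sets $U_1,\ldots,U_k$ and $W_1,\ldots,W_k$ such that: (1) for each $i \in [k]$, $U_i$ is a segment of $X$ and $W_i$ is a segment of $Y$; (2) for all distinct $i,j \in [k]$, $U_i \cap U_j = \emptyset$ and $W_i \cap W_j = \emptyset$; (3) for every $i \in [k]$, the average degree of the induced subgraph $G[U_i \cup W_i]$ is at least $r$.
   Context: $[k]=\{1,\ldots,k\}$. A segment of $X$ is a set of the form $\{x_i,x_{i+1},\ldots,x_j\}$ for some $1 \le i < j \le a$; a segment of $Y$ is a set of the form $\{y_i,\ldots,y_j\}$ for some $1\le i<j\le b$. *)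

(* Defs.v *)
From mathcomp Require Import all_boot all_order all_algebra.
Set Implicit Arguments. Unset Strict Implicit. Unset Printing Implicit Defensive.
Import Order.TTheory GRing.Theory Num.Theory.

(* A bipartite graph with ordered classes X = 'I_a (x_1..x_a ↦ 0..a-1)
   and Y = 'I_b, given by its edge relation E : 'I_a -> 'I_b -> bool. *)

Definition nbhX (a b : nat) (E : 'I_a -> 'I_b -> bool) (x : 'I_a) : {set 'I_b} :=
  [set y | E x y].
Definition nbhY (a b : nat) (E : 'I_a -> 'I_b -> bool) (y : 'I_b) : {set 'I_a} :=
  [set x | E x y].

Definition min_degree_ge (a b : nat) (E : 'I_a -> 'I_b -> bool) (d : nat) : Prop :=
  (forall x : 'I_a, d <= #|nbhX E x|) /\ (forall y : 'I_b, d <= #|nbhY E y|).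

Definition segment (n : nat) (S : {set 'I_n}) : Prop :=
  exists i j : nat, i < j < n /\ S = [set v : 'I_n | i <= v <= j].

Definition n_edges (a b : nat) (E : 'I_a -> 'I_b -> bool)
  (U : {set 'I_a}) (W : {set 'I_b}) : nat :=
  #|[set p : 'I_a * 'I_b | [&& p.1 \in U, p.2 \in W & E p.1 p.2]]|.

Definition avg_degree (a b : nat) (E : 'I_a -> 'I_b -> bool)
  (U : {set 'I_a}) (W : {set 'I_b}) : rat :=
  ((2 * n_edges E U W)%:R / (#|U| + #|W|)%:R)%R.

(* Main.v *)
Require Import Defs.
From mathcomp Require Import all_boot all_order all_algebra.
From mathcomp Require Import zify.
Import Order.TTheory GRing.Theory Num.Theory.

Definition Nc A B (F : 'I_A -> 'I_B -> bool) (x0 x1 y0 y1 : nat) : nat :=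
  \sum_(x : 'I_A) \sum_(y : 'I_B) [&& x0 <= x < x1, y0 <= y < y1 & F x y].

Arguments Nc {A B}.

Lemma count_ord n x0 x1 : \sum_(v < n) (x0 <= v < x1) = minn n x1 - x0.
Proof.
elim: n => [|n IH]; first by rewrite big_ord0 min0n.
rewrite big_ord_recr /= IH; lia.
Qed.

Lemma Nc_le A B F x0 x1 y0 y1 : @Nc A B F x0 x1 y0 y1 <= (x1 - x0) * (y1 - y0).
Proof.
apply: leq_trans (_ : _ <= \sum_(x : 'I_A) (x0 <= x < x1) * \sum_(y:'I_B) (y0 <= y < y1)) _.
  apply: leq_sum => x _; rewrite big_distrr /=; apply: leq_sum => y _.
  by case: (x0 <= x < x1); case: (y0 <= y < y1); case: F.
rewrite -big_distrl /= !count_ord; apply: leq_mul; lia.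
Qed.

Lemma Nc_split A B F x0 x1 c q d : c <= q -> q < d ->
  @Nc A B F x0 x1 c d = Nc F x0 x1 c q + Nc F x0 x1 q q.+1 + Nc F x0 x1 q.+1 d.
Proof.
move=> h1 h2; rewrite /Nc -!big_split; apply eq_bigr => x _; rewrite -!big_split.
apply eq_bigr => y _ /=.
case: (x0 <= x < x1); case: F; rewrite /= ?andbF //; lia.
Qed.

Lemma Nc_rowdeg A B (F : 'I_A -> 'I_B -> bool) D x0 x1 : (forall x, D <= \sum_(y : 'I_B) F x y) -> x1 <= A ->
  (x1 - x0) * D <= @Nc A B F x0 x1 0 B.
Proof.
move=> HD hx.
have -> : (x1 - x0) * D = \sum_(x : 'I_A) (x0 <= x < x1) * D.
  by rewrite -big_distrl /= count_ord; congr (_ * _); lia.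
apply: leq_sum => x _; case: (x0 <= x < x1); last by [].
rewrite mul1n; apply: leq_trans (HD x) _; apply: leq_sum => y _.
by rewrite leq0n ltn_ord.
Qed.
Arguments Nc_le {A B}.
Arguments Nc_split {A B}.
Arguments Nc_rowdeg {A B}.

Definition goodc A B (F : 'I_A -> 'I_B -> bool) (r s j y0 y1 : nat) : bool :=
  [&& 2 <= s, y0 < y1, y1 < B & r * (s + (y1.+1 - y0)) <= 2 * Nc F (j*s) (j*s+s) y0 y1.+1].
Arguments goodc {A B}.

Lemma greedy A B (F : 'I_A -> 'I_B -> bool) (k r s : nat) : 2 <= s -> forall t cur used,
  size used + t = k -> uniq used -> all (fun j => j < k) used ->
  (forall j, j < k -> j \notin used -> t*(r+4)*s + r*(B - cur) <= 2 * Nc F (j*s) (j*s+s) cur B) ->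
  exists fj f0 f1 : nat -> nat,
    (forall i, i < t -> [/\ fj i < k, fj i \notin used, goodc F r s (fj i) (f0 i) (f1 i) & cur <= f0 i]) /\
    (forall i i', i < i' -> i' < t -> fj i != fj i' /\ f1 i < f0 i').
Proof.
move=> hs; elim=> [|t IH] cur used hsz hu hall hinv.
  by exists (fun _ => 0), (fun _ => 0), (fun _ => 0); split=> [i|i i'].
have [j0 hj0 hj0u] : exists2 j0, j0 < k & j0 \notin used.
  case: (boolP [exists j : 'I_k, val j \notin used]) => [/existsP [j hj] | /existsPn hn].
    by exists (val j); [exact: ltn_ord | exact: hj].
  have : size (iota 0 k) <= size used.
    apply: uniq_leq_size; first exact: iota_uniq.
    move=> j; rewrite mem_iota add0n => /andP [_ hj].
    by have := hn (Ordinal hj); rewrite negbK.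
  rewrite size_iota; lia.
have hN0 := hinv j0 hj0 hj0u.
have hle0 := Nc_le F (j0*s) (j0*s+s) cur B.
rewrite addKn in hle0.
have hB : cur.+1 < B.
  have h4 : 4 * s <= t.+1 * (r + 4) * s.
    rewrite -mulnA; apply: leq_trans _ (leq_pmull _ _) => //; rewrite mulnDl; lia.
  have h5 := leq_trans (leq_addr (r*(B-cur)) _) hN0.
  have h6 : 2 * Nc F (j0 * s) (j0 * s + s) cur B <= 2 * (s * (B - cur)) by rewrite leq_mul2l hle0 orbT.
  have : 4 * s <= 2 * (s * (B - cur)) by lia.
  move=> h7; case: (leqP B cur.+1) => // hh; exfalso.
  have h8 : B - cur <= 1 by lia.
  have := leq_mul (leqnn s) h8; lia.
pose P := fun q => [exists j : 'I_k, (val j \notin used) && goodc F r s j cur q].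
have exP : exists q, P q.
  exists B.-1; apply/existsP; exists (Ordinal hj0); rewrite /= hj0u /goodc hs /=.
  have -> : B.-1.+1 = B by lia.
  apply/and3P; split; try lia.
case: (ex_minnP exP) => q /existsP [j1 /andP [hj1u hg1]] qmin.
have hg1' := hg1; move: hg1' => /and4P [_ hcq hqB _].
have hinv' : forall j, j < k -> j \notin (val j1 :: used) ->
    t*(r+4)*s + r*(B - q.+1) <= 2 * Nc F (j*s) (j*s+s) q.+1 B.
  move=> j hj; rewrite inE negb_or => /andP [hjj1 hju].
  have hN := hinv j hj hju.
  have hsp := Nc_split F (j*s) (j*s+s) cur q B (ltnW hcq) hqB.
  have h1 := Nc_le F (j*s) (j*s+s) q q.+1.
  rewrite addKn subSnn muln1 in h1.
  have h2 : 2 * Nc F (j*s) (j*s+s) cur q <= r * (s + (q - cur)) + 2 * s.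
    case: (leqP q cur.+1) => hq.
      have := Nc_le F (j*s) (j*s+s) cur q.
      have : q - cur <= 1 by lia.
      nia.
    have : ~~ goodc F r s j cur q.-1.
      apply/negP => hg; have : P q.-1.
        by apply/existsP; exists (Ordinal hj); rewrite /= hju.
      move/qmin; lia.
    rewrite /goodc hs /=.
    have -> : q.-1.+1 = q by lia.
    have -> : cur < q.-1 by lia.
    rewrite /=.
    have -> : q <= B by lia.
    rewrite /= -ltnNge; lia.
  nia.
have h1' : size (val j1 :: used) + t = k.
  rewrite /= addSn -addnS; exact: hsz.
have h2' : uniq (val j1 :: used) by rewrite /= hj1u hu.
have h3' : all (fun j => j < k) (val j1 :: used) by rewrite /= ltn_ord hall.
have [gj [g0 [g1 [Hg1 Hg2]]]] := IH _ _ h1' h2' h3' hinv'.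
exists (fun i => if i is i'.+1 then gj i' else val j1),
       (fun i => if i is i'.+1 then g0 i' else cur),
       (fun i => if i is i'.+1 then g1 i' else q).
split.
  case=> [|i] hi /=; first by rewrite ltn_ord hj1u hg1.
  have [h1 h2 h3 h4] := Hg1 i hi.
  move: h2; rewrite inE negb_or => /andP [_ h2].
  split=> //; lia.
case=> [|i] [|i'] //= hii' hi'.
  have [_ h2 _ h4] := Hg1 i' hi'.
  move: h2; rewrite inE negb_or => /andP [h2 _].
  split; [by rewrite eq_sym | lia].
exact: Hg2.
Qed.

Definition Nset A B (F : 'I_A -> 'I_B -> bool) (U : {set 'I_A}) (W : {set 'I_B}) : nat :=
  \sum_(x : 'I_A) \sum_(y : 'I_B) [&& x \in U, y \in W & F x y].
Arguments Nset {A B}.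

Lemma card_seg n i j : j < n -> #|[set v : 'I_n | i <= v <= j]| = j.+1 - i.
Proof.
move=> hj; rewrite -sum1_card big_mkcond /=.
rewrite (eq_bigr (fun v : 'I_n => nat_of_bool (i <= v < j.+1))) ?count_ord; first lia.
by move=> v _; rewrite inE ltnS; case: (_ && _).
Qed.

Lemma Nset_seg A B (F : 'I_A -> 'I_B -> bool) x0 x1 y0 y1 :
  Nset F [set v : 'I_A | x0 <= v <= x1] [set v : 'I_B | y0 <= v <= y1] = Nc F x0 x1.+1 y0 y1.+1.
Proof. by rewrite /Nset /Nc; apply eq_bigr => x _; apply eq_bigr => y _; rewrite !inE !ltnS. Qed.

Lemma sum_le_card B (f : 'I_B -> bool) : \sum_(y : 'I_B) f y <= B.
Proof.
apply: leq_trans (_ : _ <= \sum_(y : 'I_B) 1) _.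
  by apply: leq_sum => y _; case: (f y).
by rewrite sum_nat_const card_ord muln1.
Qed.

Lemma core A B (F : 'I_A -> 'I_B -> bool) k r : 1 <= k -> 1 <= r -> 0 < A -> B <= A ->
  (forall x, 2^9*r*k <= \sum_(y:'I_B) F x y) ->
  exists (U : 'I_k -> {set 'I_A}) (W : 'I_k -> {set 'I_B}),
   (forall i, segment (U i) /\ segment (W i)) /\
   (forall i j, i != j -> [disjoint U i & U j] /\ [disjoint W i & W j]) /\
   (forall i, r * (#|U i| + #|W i|) <= 2 * Nset F (U i) (W i)).
Proof.
move=> hk hr hA hBA hdeg.
have hDB : 2^9*r*k <= B.
  have h1 := hdeg (Ordinal hA); have h2 := @sum_le_card B (F (Ordinal hA)); lia.
set s := A %/ k.
have hks : s * k <= A by exact: leq_trunc_div.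
have hks2 : A < s.+1 * k by exact: ltn_ceil.
have hs : 2 <= s by rewrite /s leq_divRL //; nia.
have hinv : forall j, j < k -> j \notin [::] ->
    k*(r+4)*s + r*(B - 0) <= 2 * Nc F (j*s) (j*s+s) 0 B.
  move=> j hj _.
  have hjs : j*s+s <= A by nia.
  have := Nc_rowdeg F (2^9*r*k) (j*s) (j*s+s) hdeg hjs.
  rewrite addKn subn0 => h.
  have hB : B <= 2 * (k * s) by nia.
  nia.
have [fj [f0 [f1 [H1 H2]]]] := @greedy A B F k r s hs k 0 [::] (add0n k) isT isT hinv.
exists (fun i : 'I_k => [set v : 'I_A | fj i * s <= v <= fj i * s + s.-1]).
exists (fun i : 'I_k => [set v : 'I_B | f0 i <= v <= f1 i]).
split; [|split].
- move=> i; have [h1 _ /and4P [_ h3 h4 _] _] := H1 i (ltn_ord i).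
  split.
    exists (fj i * s), (fj i * s + s.-1); split => //; apply/andP; split; nia.
  by exists (f0 i), (f1 i); split => //; apply/andP.
- move=> i j hij.
  have hfj : fj i != fj j /\ (i < j -> f1 i < f0 j) /\ (j < i -> f1 j < f0 i).
    case: (ltngtP i j) => hh.
    + by have [] := H2 i j hh (ltn_ord j).
    + by have [] := H2 j i hh (ltn_ord i); rewrite eq_sym.
    + by move: hij; rewrite (val_inj hh) eqxx.
  case: hfj => hne [hl hr'].
  split; rewrite disjoint_subset; apply/subsetP => v; rewrite !inE.
    move=> /andP [h1 h2]; apply/negP => /andP [h3 h4].
    case: (ltngtP (fj i) (fj j)) hne => hh _ //; nia.
  move=> /andP [h1 h2]; apply/negP => /andP [h3 h4].
  case: (ltngtP i j) => hh.
  + have := hl hh; lia.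
  + have := hr' hh; lia.
  + by move: hij; rewrite (val_inj hh) eqxx.
- move=> i; have [h1 _ /and4P [_ h3 h4 h5] _] := H1 i (ltn_ord i).
  rewrite Nset_seg !card_seg //; last nia.
  have -> : (fj i * s + s.-1).+1 = fj i * s + s by lia.
  have -> : fj i * s + s - fj i * s = s by lia.
  exact: h5.
Qed.

Lemma n_edges_Nset a b (E : 'I_a -> 'I_b -> bool) U W : n_edges E U W = Nset E U W.
Proof.
rewrite /n_edges /Nset pair_big /= -sum1_card big_mkcond /=.
by apply: eq_bigr => [[x y]] _; rewrite inE /=; case: (_ && _).
Qed.

Lemma Nset_tr a b (E : 'I_a -> 'I_b -> bool) U W :
  Nset (fun y x => E x y) W U = Nset E U W.
Proof.
rewrite /Nset exchange_big /=; apply eq_bigr => x _; apply eq_bigr => y _.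
by case: (x \in U); case: (y \in W).
Qed.

Lemma card_set_sum (T : finType) (P : pred T) : #|[set x | P x]| = \sum_x P x.
Proof. by rewrite -sum1_card big_mkcond /=; apply: eq_bigr => x _; rewrite inE; case: (P x). Qed.

Lemma avg_ok a b (E : 'I_a -> 'I_b -> bool) (U : {set 'I_a}) (W : {set 'I_b}) r :
  segment U -> r * (#|U| + #|W|) <= 2 * Nset E U W ->
  (r%:R <= avg_degree E U W)%R.
Proof.
move=> [i [j [/andP [hij hjn] ->]]] h.
rewrite /avg_degree ler_pdivlMr; last first.
  by rewrite ltr0n card_seg //; lia.
by rewrite -natrM ler_nat n_edges_Nset.
Qed.

Theorem lemma11 (k r a b : nat) (E : 'I_a -> 'I_b -> bool) :
  1 <= k -> 1 <= r -> 0 < a + b ->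
  min_degree_ge E (2 ^ 9 * r * k) ->
  exists (U : 'I_k -> {set 'I_a}) (W : 'I_k -> {set 'I_b}),
    (forall i : 'I_k, segment (U i) /\ segment (W i)) /\
    (forall i j : 'I_k, i != j ->
        [disjoint U i & U j] /\ [disjoint W i & W j]) /\
    (forall i : 'I_k, (r%:R <= avg_degree E (U i) (W i))%R).
Proof.
move=> hk hr hab [hX hY].
case: (leqP b a) => hba.
  have [U [W [H1 [H2 H3]]]] := @core a b E k r hk hr (ltac:(lia)) hba
    (fun x => leq_trans (hX x) (eq_leq (card_set_sum _ _))).
  exists U, W; split => //; split => // i.
  by apply: avg_ok (H3 i); case: (H1 i).
have [U [W [H1 [H2 H3]]]] := @core b a (fun y x => E x y) k r hk hr (ltac:(lia)) (ltnW hba)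
  (fun y => leq_trans (hY y) (eq_leq (card_set_sum _ _))).
exists W, U; split; first by move=> i; case: (H1 i).
split; first by move=> i j hij; case: (H2 i j hij).
move=> i; apply: avg_ok; first by case: (H1 i).
by rewrite -Nset_tr addnC.
Qed.
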